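(* Let $A,B,\beta,\xi_0,\theta>0$. Let $v_{n,m}\colon[\xi_0,\infty)\to[0,\infty)$, for integers $n,m\ge0$, and let $w\colon[\xi_0,\infty)\to[0,\infty)$ be bounded. Suppose that for all $n,m\ge0$ and $\xi\ge\xi_0$: (1) $v_{n+1,m}(\xi)\le v_{n,m}(\xi)$; (2) $v_{n+N,m}(\xi)\le(1-A\xi^{-\beta})v_{n,m}(\xi)$ for all integers $N>B\log\xi$; (3) $v_{0,m}(\xi)\le\theta^{-m}w(\xi)$; (4) $w$ decays rapidly in $\xi$. Then for any $c>0$ the sequence $t_n=\sup\{v_{n,m}(\xi):\ \xi>\xi_0,\ m\in\mathbb Z_{\ge0},\ m<c\log n\}$ decays rapidly in $n$.
   Context: A function $w\colon D\subseteq(0,\infty)\to\mathbb R$ decays rapidly in $\xi$ if for each $\ell\ge1$ there is $C$ with $|w(\xi)|\le C\xi^{-\ell}$ for all $\xi\in D$. A sequence $\{t_n\}$ decays rapidly in $n$ if for each $\ell\ge1$ there is $C$ with $|t_n|\le Cn^{-\ell}$ for all $n\ge1$. *)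

(* Defs.v *)
From Stdlib Require Import Reals.
From Coquelicot Require Import Coquelicot.
Open Scope R_scope.

Definition decays_rapidly_on (D : R -> Prop) (w : R -> R) : Prop :=
  forall l : nat, (1 <= l)%nat ->
    exists C : R, forall xi : R, D xi -> Rabs (w xi) <= C * / xi ^ l.

Definition seq_decays_rapidly (t : nat -> Rbar) : Prop :=
  forall l : nat, (1 <= l)%nat ->
    exists C : R, forall n : nat, (1 <= n)%nat ->
      Rbar_le (Rbar_abs (t n)) (Finite (C * / INR n ^ l)).

Definition tset (v : nat -> nat -> R -> R) (xi0 c : R) (n : nat) : R -> Prop :=
  fun x => exists (xi : R) (m : nat),
    xi0 < xi /\ INR m < c * ln (INR n) /\ x = v n m xi.

(* t_n = sup of that set, with the convention sup of the empty set = 0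
   (all values are nonnegative); the sup is taken in the extended reals. *)
Definition tseq (v : nat -> nat -> R -> R) (xi0 c : R) (n : nat) : Rbar :=
  match Lub_Rbar (tset v xi0 c n) with
  | m_infty => Finite 0
  | x => x
  end.

(* Main.v *)
Require Import Defs.
From Stdlib Require Import Reals.
From Coquelicot Require Import Coquelicot.
Open Scope R_scope.
From Stdlib Require Import Lra Lia ZArith Classical.

Lemma exp_le_mono x y : x <= y -> exp x <= exp y.
Proof. intros [H|H]. left; apply exp_increasing; auto. subst; lra. Qed.

Lemma exp_mult_nat k x : exp (INR k * x) = exp x ^ k.
Proof.
  induction k. simpl. rewrite Rmult_0_l, exp_0. reflexivity.
  rewrite S_INR, Rmult_plus_distr_r, Rmult_1_l, exp_plus, IHk. simpl. ring.
Qed.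

Lemma choose_N x : exists N : nat, (1 <= N)%nat /\ x < INR N /\ INR N <= Rmax x 0 + 1.
Proof.
  destruct (archimed x) as [H1 H2].
  destruct (Z_le_gt_dec (up x) 0) as [Hz|Hz].
  - exists 1%nat. split. lia. simpl. apply IZR_le in Hz.
    split. lra. generalize (Rmax_r x 0); lra.
  - exists (Z.to_nat (up x)). rewrite INR_IZR_INZ, Z2Nat.id by lia.
    split. lia. split. lra. generalize (Rmax_l x 0); lra.
Qed.

Lemma nat_above x : exists p : nat, x <= INR p.
Proof. destruct (choose_N x) as [N [_ [H _]]]. exists N; lra. Qed.

Lemma ln_le_sub1 x : 0 < x -> ln x <= x - 1.
Proof. intros Hx. generalize (exp_ineq1_le (ln x)). rewrite exp_ln; lra. Qed.

Lemma exp_ge_pow q y : (1 <= q)%nat -> 0 <= y -> (y / INR q) ^ q <= exp y.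
Proof.
  intros Hq Hy.
  assert (HqR : 0 < INR q) by (apply lt_0_INR; lia).
  replace y with (INR q * (y / INR q)) at 2 by (field; lra).
  rewrite exp_mult_nat. apply pow_incr. split.
  apply Rdiv_le_0_compat; lra.
  generalize (exp_ineq1_le (y / INR q)). assert (0 <= y / INR q) by (apply Rdiv_le_0_compat; lra). lra.
Qed.

Lemma tseq_bound v xi0 c n b : 0 <= b ->
  (forall x, tset v xi0 c n x -> 0 <= x /\ x <= b) ->
  Rbar_le (Rbar_abs (tseq v xi0 c n)) (Finite b).
Proof.
  intros Hb H. unfold tseq.
  destruct (Lub_Rbar_correct (tset v xi0 c n)) as [Hub Hlub].
  destruct (Lub_Rbar (tset v xi0 c n)) as [r| |] eqn:E.
  - destruct (classic (exists x, tset v xi0 c n x)) as [[x Hx]|Hne].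
    + assert (Hr : Rbar_le (Finite r) (Finite b)).
      { apply Hlub. intros y Hy. simpl. apply H; auto. }
      simpl in Hr. specialize (Hub x Hx). simpl in Hub. destruct (H x Hx).
      simpl. rewrite Rabs_pos_eq; lra.
    + exfalso. assert (Hr : Rbar_le (Finite r) m_infty).
      { apply Hlub. intros y Hy. exfalso; apply Hne; eauto. }
      simpl in Hr. auto.
  - exfalso. assert (Hr : Rbar_le p_infty (Finite b)).
    { apply Hlub. intros y Hy. simpl. apply H; auto. }
    simpl in Hr. auto.
  - simpl. rewrite Rabs_R0. auto.
Qed.

Lemma v_mono (xi0 : R) (v : nat -> nat -> R -> R)
  (H1 : forall n m xi, xi0 <= xi -> v (S n) m xi <= v n m xi) :
  forall n k m xi, xi0 <= xi -> v (n + k)%nat m xi <= v n m xi.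
Proof.
  intros n k m xi Hx. induction k. rewrite Nat.add_0_r; lra.
  rewrite Nat.add_succ_r. eapply Rle_trans. apply H1; auto. auto.
Qed.

Lemma v_iter (xi0 x : R) (v : nat -> nat -> R -> R) (N : nat) m xi
  (Hv_nonneg : forall n m xi, xi0 <= xi -> 0 <= v n m xi)
  (Hx : xi0 <= xi)
  (H2 : forall n, v (n + N)%nat m xi <= (1 - x) * v n m xi) :
  forall k, v (k * N)%nat m xi <= exp (- (INR k * x)) * v 0%nat m xi.
Proof.
  induction k.
  - simpl. rewrite Rmult_0_l, Ropp_0, exp_0. lra.
  - replace (S k * N)%nat with (k * N + N)%nat by lia.
    eapply Rle_trans. apply H2.
    assert (E : exp (- (INR (S k) * x)) = exp (-x) * exp (- (INR k * x))).
    { rewrite <- exp_plus. f_equal. rewrite S_INR. ring. }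
    rewrite E, Rmult_assoc.
    generalize (exp_ineq1_le (-x)); intro He.
    generalize (Hv_nonneg (k*N)%nat m xi Hx); intro Hp.
    apply Rle_trans with (exp (-x) * v (k * N)%nat m xi).
    apply Rmult_le_compat_r; lra.
    apply Rmult_le_compat_l. left; apply exp_pos. auto.
Qed.

Theorem proposition7p5
  (A B beta xi0 theta : R)
  (HA : 0 < A) (HB : 0 < B) (Hbeta : 0 < beta) (Hxi0 : 0 < xi0) (Htheta : 0 < theta)
  (v : nat -> nat -> R -> R) (w : R -> R)
  (Hv_nonneg : forall n m xi, xi0 <= xi -> 0 <= v n m xi)
  (Hw_nonneg : forall xi, xi0 <= xi -> 0 <= w xi)
  (Hw_bdd : exists M : R, forall xi, xi0 <= xi -> Rabs (w xi) <= M)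
  (H1 : forall n m xi, xi0 <= xi -> v (S n) m xi <= v n m xi)
  (H2 : forall n m xi, xi0 <= xi -> forall N : nat, B * ln xi < INR N ->
          v (n + N)%nat m xi <= (1 - A * Rpower xi (- beta)) * v n m xi)
  (H3 : forall m xi, xi0 <= xi -> v 0%nat m xi <= / theta ^ m * w xi)
  (H4 : decays_rapidly_on (fun xi => xi0 <= xi) w) :
  forall c : R, 0 < c -> seq_decays_rapidly (tseq v xi0 c).
Proof.
  intros c Hc l Hl.
  set (K := Rmax 1 (/theta)).
  assert (HK1 : 1 <= K) by apply Rmax_l.
  destruct (nat_above (c * ln K)) as [p Hp].
  destruct (nat_above (1+beta)) as [e0 He0].
  set (e := S e0).
  assert (He : 1 + beta <= INR e) by (unfold e; rewrite S_INR; generalize (pos_INR e0); lra).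
  destruct Hw_bdd as [M HM].
  destruct (H4 ((p+l)*(2*e))%nat ltac:(unfold e; nia)) as [CL HCL].
  set (a := A/(B+1)).
  assert (Ha : 0 < a) by (unfold a; apply Rdiv_lt_0_compat; lra).
  set (q := (2*(p+l))%nat).
  assert (Hq : (1 <= q)%nat) by (unfold q; lia).
  assert (HqR : 0 < INR q) by (apply lt_0_INR; lia).
  set (E0 := exp (A * Rpower xi0 (-beta))).
  set (C := Rabs CL + E0 * Rabs M * (INR q / a)^q).
  assert (HC2 : 0 <= E0 * Rabs M * (INR q / a)^q).
  { apply Rmult_le_pos. apply Rmult_le_pos. left; apply exp_pos. apply Rabs_pos.
    apply pow_le. apply Rdiv_le_0_compat; lra. }
  assert (HC : 0 <= C) by (unfold C; generalize (Rabs_pos CL); lra).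
  exists C. intros n Hn.
  assert (Hn1 : 1 <= INR n) by (apply (le_INR 1); auto).
  assert (Hnl : 0 < / INR n ^ l) by (apply Rinv_0_lt_compat, pow_lt; lra).
  apply tseq_bound. { apply Rmult_le_pos; lra. }
  intros x [xi [m [Hxi [Hm ->]]]]. split. apply Hv_nonneg; lra.
  assert (Hxip : 0 < xi) by lra.
  assert (HlnK : 0 <= ln K) by (rewrite <- ln_1; apply ln_le; lra).
  assert (Hlnn : 0 <= ln (INR n)) by (rewrite <- ln_1; apply ln_le; lra).
  assert (Hth : / theta ^ m <= INR n ^ p).
  { rewrite <- pow_inv. apply Rle_trans with (K^m).
    apply pow_incr; split; [left; apply Rinv_0_lt_compat; auto | apply Rmax_r].
    rewrite <- Rpower_pow by lra. rewrite <- (Rpower_pow p (INR n)) by lra. unfold Rpower.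
    apply exp_le_mono.
    apply Rle_trans with (c * ln (INR n) * ln K).
    apply Rmult_le_compat_r; lra.
    replace (c * ln (INR n) * ln K) with (ln (INR n) * (c * ln K)) by ring.
    rewrite (Rmult_comm (INR p)). apply Rmult_le_compat_l; lra. }
  assert (Hv0' : v 0%nat m xi <= INR n ^ p * w xi).
  { eapply Rle_trans. apply H3; lra. apply Rmult_le_compat_r. apply Hw_nonneg; lra. auto. }
  assert (Hv0 : v n m xi <= INR n ^ p * w xi).
  { eapply Rle_trans; [|apply Hv0']. apply (v_mono xi0 v H1 0 n); lra. }
  destruct (Rle_or_lt (INR n) (xi ^ (2*e))) as [Hbig|Hsmall].
  - assert (Hw : w xi <= Rabs CL * / INR n ^ (p+l)).
    { eapply Rle_trans. apply Rle_abs. eapply Rle_trans. apply HCL; lra.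
      rewrite Nat.mul_comm, pow_mult.
      apply Rle_trans with (Rabs CL * / (xi^(2*e)) ^ (p+l)).
      apply Rmult_le_compat_r. left; apply Rinv_0_lt_compat, pow_lt, pow_lt; auto. apply Rle_abs.
      apply Rmult_le_compat_l. apply Rabs_pos. apply Rinv_le_contravar. apply pow_lt; lra.
      apply pow_incr; lra. }
    eapply Rle_trans. apply Hv0. eapply Rle_trans. apply Rmult_le_compat_l. apply pow_le; lra. apply Hw.
    rewrite pow_add.
    replace (INR n ^ p * (Rabs CL * / (INR n ^ p * INR n ^ l))) with (Rabs CL * / INR n ^ l)
      by (field; split; apply pow_nonzero; lra).
    apply Rmult_le_compat_r. lra. unfold C; lra.
  - destruct (choose_N (B * ln xi)) as [N [HN1 [HN2 HN3]]].
    set (k := (n / N)%nat).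
    assert (HNp : 0 < INR N) by (apply lt_0_INR; lia).
    assert (Hk : (k * N <= n)%nat).
    { unfold k. rewrite Nat.mul_comm. apply Nat.Div0.mul_div_le. }
    assert (HkN : INR n < (INR k + 1) * INR N).
    { assert (Hnat : (n < (k + 1) * N)%nat).
      { unfold k. generalize (Nat.div_mod n N ltac:(lia)). generalize (Nat.mod_upper_bound n N ltac:(lia)). nia. }
      apply lt_INR in Hnat. rewrite mult_INR, plus_INR in Hnat. simpl in Hnat. exact Hnat. }
    set (x := A * Rpower xi (-beta)).
    assert (Hiter : v (k*N)%nat m xi <= exp (-(INR k * x)) * v 0%nat m xi).
    { apply (v_iter xi0 x v N m xi Hv_nonneg ltac:(lra)). intro n'. apply H2; lra. }
    assert (Hvn : v n m xi <= v (k*N)%nat m xi).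
    { replace n with (k*N + (n - k*N))%nat at 1 by lia. apply (v_mono xi0 v H1); lra. }
    assert (Hx0 : x <= A * Rpower xi0 (-beta)).
    { unfold x, Rpower. apply Rmult_le_compat_l; [lra|]. apply exp_le_mono.
      assert (ln xi0 <= ln xi) by (apply ln_le; lra). nra. }
    assert (HRp : 0 < Rpower xi (-beta)) by (unfold Rpower; apply exp_pos).
    assert (Hxpos : 0 < x) by (unfold x; nra).
    set (s := sqrt (INR n)).
    assert (Hss : s * s = INR n) by (unfold s; apply sqrt_sqrt; lra).
    assert (Hs1 : 1 <= s) by (unfold s; rewrite <- sqrt_1; apply sqrt_le_1_alt; lra).
    assert (Hkey : a * s * INR N <= INR n * x).
    { destruct (Rle_or_lt 1 xi) as [Hx1|Hx1].
      - assert (Hl0 : 0 <= ln xi) by (rewrite <- ln_1; apply ln_le; lra).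
        rewrite Rmax_left in HN3 by nra.
        generalize (ln_le_sub1 xi Hxip); intro Hlx.
        assert (HNb : INR N <= (B+1) * xi) by nra.
        assert (Hprod : Rpower xi (-beta) * Rpower xi (1+beta) = xi).
        { rewrite <- Rpower_plus. replace (-beta + (1+beta)) with 1 by ring. apply Rpower_1; lra. }
        assert (HP : Rpower xi (1+beta) <= s).
        { apply Rle_trans with (Rpower xi (INR e)). apply Rle_Rpower; lra.
          rewrite Rpower_pow by lra. left. unfold s.
          rewrite <- (sqrt_pow2 (xi ^ e)) by (apply pow_le; lra).
          apply sqrt_lt_1. apply pow_le; apply pow_le; lra. lra.
          rewrite <- pow_mult, Nat.mul_comm. exact Hsmall. }
        apply Rle_trans with (a * s * ((B+1) * Rpower xi (-beta) * s)).
        { apply Rmult_le_compat_l. nra. rewrite <- Hprod in HNb.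
          apply Rle_trans with (1 := HNb). rewrite Rmult_assoc. apply Rmult_le_compat_l. lra.
          apply Rmult_le_compat_l; lra. }
        unfold a, x. rewrite <- Hss. right. field. lra.
      - assert (Hl0 : ln xi < 0) by (rewrite <- ln_1; apply ln_increasing; lra).
        rewrite Rmax_right in HN3 by nra.
        assert (HR1 : 1 <= Rpower xi (-beta)).
        { unfold Rpower. generalize (exp_ineq1_le (-beta * ln xi)). nra. }
        assert (Ha' : a <= A).
        { unfold a. apply Rle_trans with (A / 1). apply Rmult_le_compat_l. lra.
          apply Rinv_le_contravar; lra. lra. }
        unfold x. rewrite <- Hss.
        apply Rle_trans with (A * s * 1). apply Rmult_le_compat; nra.
        assert (s <= s * s) by nra. assert (A <= A * Rpower xi (-beta)) by nra.
        rewrite Rmult_1_r, (Rmult_comm A s).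
        apply Rmult_le_compat; nra. }
    assert (Hexp : a * s - A * Rpower xi0 (-beta) <= INR k * x).
    { apply Rmult_le_reg_r with (INR N). lra.
      assert (INR n * x < (INR k + 1) * INR N * x) by (apply Rmult_lt_compat_r; lra).
      nra. }
    assert (HwM : w xi <= Rabs M).
    { eapply Rle_trans. apply Rle_abs. eapply Rle_trans. apply HM; lra. apply Rle_abs. }
    assert (Hexp2 : exp (-(INR k * x)) <= E0 * (INR q / a)^q * / INR n ^ (p+l)).
    { apply Rle_trans with (exp (A * Rpower xi0 (-beta) - a * s)).
      apply exp_le_mono; lra.
      unfold Rminus. rewrite exp_plus. fold E0. rewrite Rmult_assoc.
      apply Rmult_le_compat_l. left; apply exp_pos.
      rewrite exp_Ropp.
      assert (Hq1 : (a * s / INR q) ^ q <= exp (a * s)) by (apply exp_ge_pow; [exact Hq | nra]).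
      assert (Hpow : (a * s / INR q) ^ q = (a / INR q) ^ q * INR n ^ (p+l)).
      { replace (a * s / INR q) with ((a / INR q) * s) by (field; lra).
        rewrite Rpow_mult_distr. f_equal. unfold q. rewrite pow_mult. simpl. rewrite Rmult_1_r, Hss. reflexivity. }
      assert (Hpos : 0 < (a / INR q) ^ q * INR n ^ (p+l)).
      { apply Rmult_lt_0_compat; apply pow_lt. apply Rdiv_lt_0_compat; lra. lra. }
      apply Rle_trans with (/ ((a / INR q) ^ q * INR n ^ (p+l))).
      apply Rinv_le_contravar. exact Hpos. rewrite <- Hpow. exact Hq1.
      right. rewrite Rinv_mult. f_equal. rewrite <- pow_inv. f_equal. field. split; lra. }
    eapply Rle_trans. apply Hvn. eapply Rle_trans. apply Hiter.
    apply Rle_trans with (E0 * (INR q / a)^q * / INR n ^ (p+l) * (INR n ^ p * Rabs M)).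
    { apply Rmult_le_compat. left; apply exp_pos. apply Hv_nonneg; lra. exact Hexp2.
      eapply Rle_trans. apply Hv0'. apply Rmult_le_compat_l. apply pow_le; lra. exact HwM. }
    rewrite pow_add.
    replace (E0 * (INR q / a) ^ q * / (INR n ^ p * INR n ^ l) * (INR n ^ p * Rabs M))
      with (E0 * Rabs M * (INR q / a) ^ q * / INR n ^ l)
      by (field; split; apply pow_nonzero; lra).
    apply Rmult_le_compat_r. lra. unfold C. generalize (Rabs_pos CL); lra.
Qed.
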